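(* Let $n \geq 12$ and let $\Gamma_n$ be the group with presentation $$\Gamma_n = \langle s, x \mid [s^n, x] = 1,\ [x, s^i x s^{-i}] = 1 \text{ for } 1 \leq i \leq n-1 \rangle.$$ Then $\Gamma_n$ admits a non-left-orderable HNN extension, i.e., there exist subgroups $A, B \leq \Gamma_n$ and an isomorphism $\phi: A \to B$ such that the HNN extension $(\Gamma_n, A, B, t, \phi)$ is not left-orderable.
   Context: $[a,b]$ denotes the commutator of $a$ and $b$. Given a group $G$, subgroups $A, B \leq G$ and an isomorphism $\phi: A \to B$, the HNN extension $(G, A, B, t, \phi)$ is the quotient of the free product $G \ast \langle t \rangle$ (with $\langle t\rangle$ infinite cyclic) by the normal closure of $\{ t a t^{-1} \phi(a)^{-1} : a \in A\}$. A group is left-orderable if it admits a total order invariant under left multiplication. *)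

(* Defs.v *)
From Stdlib Require Import Arith.

Record grp : Type := Grp {
  carrier :> Type;
  gmul : carrier -> carrier -> carrier;
  gone : carrier;
  ginv : carrier -> carrier;
  gmulA : forall a b c, gmul a (gmul b c) = gmul (gmul a b) c;
  gmul1 : forall a, gmul gone a = a;
  gmulV : forall a, gmul (ginv a) a = gone
}.

Arguments gmul {g}.
Arguments gone {g}.
Arguments ginv {g}.

Fixpoint gpow {G : grp} (a : G) (n : nat) : G :=
  match n with
  | O => gone
  | S k => gmul a (gpow a k)
  end.

Definition comm {G : grp} (a b : G) : G :=
  gmul (gmul a b) (gmul (ginv a) (ginv b)).

Definition conjpow {G : grp} (s y : G) (i : nat) : G :=
  gmul (gmul (gpow s i) y) (ginv (gpow s i)).

Definition is_hom {G H : grp} (f : G -> H) : Prop :=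
  forall a b, f (gmul a b) = gmul (f a) (f b).

Definition is_subgroup {G : grp} (A : G -> Prop) : Prop :=
  A gone /\ (forall a b, A a -> A b -> A (gmul a b)) /\ (forall a, A a -> A (ginv a)).

(* phi (a function on G, only its restriction to A matters) is an isomorphism A -> B *)
Definition is_iso_between {G : grp} (A B : G -> Prop) (phi : G -> G) : Prop :=
  (forall a, A a -> B (phi a)) /\
  (forall a b, A a -> A b -> phi (gmul a b) = gmul (phi a) (phi b)) /\
  (forall a b, A a -> A b -> phi a = phi b -> a = b) /\
  (forall b, B b -> exists a, A a /\ phi a = b).

Definition gamma_rels (n : nat) {H : grp} (s x : H) : Prop :=
  comm (gpow s n) x = gone /\
  (forall i, 1 <= i <= n - 1 -> comm x (conjpow s x i) = gone).

(* (G, s, x) is the group with presentation < s, x | gamma_rels n >,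
   characterised by the universal property of the presentation. *)
Definition is_Gamma (n : nat) (G : grp) (s x : G) : Prop :=
  gamma_rels n s x /\
  forall (H : grp) (h k : H), gamma_rels n h k ->
    exists f : G -> H, is_hom f /\ f s = h /\ f x = k /\
      forall g : G -> H, is_hom g -> g s = h -> g x = k -> forall y, g y = f y.

(* (E, iota, t) is the HNN extension (G, A, B, t, phi), i.e. the quotient of
   G * <t> by the normal closure of { t a t^-1 phi(a)^-1 }, characterised by its
   universal property. *)
Definition is_HNN {G : grp} (A B : G -> Prop) (phi : G -> G)
    (E : grp) (iota : G -> E) (t : E) : Prop :=
  is_hom iota /\
  (forall a, A a -> gmul (gmul t (iota a)) (ginv t) = iota (phi a)) /\
  forall (H : grp) (f : G -> H) (h : H), is_hom f ->
    (forall a, A a -> gmul (gmul h (f a)) (ginv h) = f (phi a)) ->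
    exists g : E -> H, is_hom g /\ (forall y, g (iota y) = f y) /\ g t = h /\
      forall g' : E -> H, is_hom g' -> (forall y, g' (iota y) = f y) -> g' t = h ->
        forall z, g' z = g z.

Definition left_orderable (E : grp) : Prop :=
  exists le : E -> E -> Prop,
    (forall a, le a a) /\
    (forall a b, le a b -> le b a -> a = b) /\
    (forall a b c, le a b -> le b c -> le a c) /\
    (forall a b, le a b \/ le b a) /\
    (forall g a b, le a b -> le (gmul g a) (gmul g b)).

(* Main.v *)
Require Import Defs.
From Stdlib Require Import Arith ZArith Lia FunctionalExtensionality ProofIrrelevance.

Local Infix "**" := gmul (at level 40, left associativity).

Lemma mA {G : grp} (a b c : G) : a ** (b ** c) = a ** b ** c. Proof. apply gmulA. Qed.
Lemma m1 {G : grp} (a : G) : gone ** a = a. Proof. apply gmul1. Qed.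
Lemma mV {G : grp} (a : G) : ginv a ** a = gone. Proof. apply gmulV. Qed.

Lemma gmulV_r {G : grp} (a : G) : a ** ginv a = gone.
Proof.
  rewrite <- (m1 (a ** ginv a)).
  rewrite <- (mV (ginv a)) at 1.
  rewrite <- mA. rewrite (mA (ginv a) a (ginv a)). rewrite mV, m1.
  apply mV.
Qed.

Lemma gmul1_r {G : grp} (a : G) : a ** gone = a.
Proof. rewrite <- (mV a), mA, gmulV_r, m1. reflexivity. Qed.

Lemma gmulKl {G : grp} (a b : G) : ginv a ** (a ** b) = b.
Proof. rewrite mA, mV, m1. reflexivity. Qed.
Lemma gmulKr {G : grp} (a b : G) : a ** (ginv a ** b) = b.
Proof. rewrite mA, gmulV_r, m1. reflexivity. Qed.

Lemma ginv_uniq {G : grp} (a b : G) : a ** b = gone -> b = ginv a.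
Proof. intro H. rewrite <- (gmulKl a b), H, gmul1_r. reflexivity. Qed.

Lemma ginv_inv {G : grp} (a : G) : ginv (ginv a) = a.
Proof. symmetry. apply ginv_uniq. apply mV. Qed.

Lemma ginv_mul {G : grp} (a b : G) : ginv (a ** b) = ginv b ** ginv a.
Proof. symmetry. apply ginv_uniq. rewrite <- !mA, (mA b), gmulV_r, m1, gmulV_r. reflexivity. Qed.

Lemma ginv1 {G : grp} : ginv (@gone G) = gone.
Proof. symmetry. apply ginv_uniq. apply m1. Qed.

Lemma gmul_cancel_l {G : grp} (a b c : G) : a ** b = a ** c -> b = c.
Proof. intro H. rewrite <- (gmulKl a b), H, gmulKl. reflexivity. Qed.

Definition commute {G : grp} (a b : G) := a ** b = b ** a.

Lemma commute_sym {G : grp} (a b : G) : commute a b -> commute b a.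
Proof. unfold commute; auto. Qed.
Lemma commute_1 {G : grp} (b : G) : commute gone b.
Proof. unfold commute. rewrite m1, gmul1_r. reflexivity. Qed.
Lemma commute_mul {G : grp} (a b c : G) : commute a c -> commute b c -> commute (a ** b) c.
Proof. unfold commute; intros H1 H2. rewrite <- mA, H2, mA, H1, mA. reflexivity. Qed.
Lemma commute_inv {G : grp} (a c : G) : commute a c -> commute (ginv a) c.
Proof. unfold commute; intros H.
  apply (gmul_cancel_l a). rewrite gmulKr.
  rewrite mA, H, <- mA, gmulV_r, gmul1_r. reflexivity. Qed.
Lemma commute_refl {G : grp} (a : G) : commute a a.
Proof. reflexivity. Qed.

Lemma comm_one_commute {G : grp} (a b : G) : comm a b = gone -> commute a b.
Proof. unfold comm, commute. intro H. apply ginv_uniq in H. rewrite <- (ginv_inv (a ** b)), <- H, ginv_mul, !ginv_inv. reflexivity. Qed.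
Lemma commute_comm_one {G : grp} (a b : G) : commute a b -> comm a b = gone.
Proof. unfold comm, commute. intro H. rewrite H, <- mA, (mA a), gmulV_r, m1, gmulV_r. reflexivity. Qed.

Lemma gpow_commute {G : grp} (a c : G) k : commute a c -> commute (gpow a k) c.
Proof. intro H. induction k; simpl. apply commute_1. apply commute_mul; auto. Qed.

Lemma gpow_S_r {G : grp} (a : G) k : gpow a (S k) = gpow a k ** a.
Proof. simpl. symmetry. apply gpow_commute. reflexivity. Qed.

Lemma gpow_add {G : grp} (a : G) k l : gpow a (k + l) = gpow a k ** gpow a l.
Proof. induction k; simpl. rewrite m1; auto. rewrite IHk, mA. reflexivity. Qed.

Lemma gpow_inv {G : grp} (a : G) k : gpow (ginv a) k = ginv (gpow a k).
Proof. induction k. simpl. rewrite ginv1; auto.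
  rewrite gpow_S_r. simpl gpow at 2. rewrite ginv_mul, IHk. reflexivity. Qed.

Lemma gpow_conj {G : grp} (y a : G) k : gpow (y ** a ** ginv y) k = y ** gpow a k ** ginv y.
Proof. induction k; simpl. rewrite gmul1_r, gmulV_r; auto.
  rewrite IHk. rewrite <- !mA. rewrite (mA (ginv y) y), mV, m1. reflexivity. Qed.

Lemma gpow_one {G : grp} k : gpow (@gone G) k = gone.
Proof. induction k; simpl; auto. rewrite IHk, m1; auto. Qed.

Definition hom_one {G H : grp} (f : G -> H) (Hf : is_hom f) : f gone = gone.
Proof. apply (gmul_cancel_l (f gone)). rewrite <- Hf, m1, gmul1_r. reflexivity. Qed.
Lemma hom_inv {G H : grp} (f : G -> H) (Hf : is_hom f) a : f (ginv a) = ginv (f a).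
Proof. apply ginv_uniq. rewrite <- Hf, gmulV_r. apply hom_one; auto. Qed.
Lemma hom_gpow {G H : grp} (f : G -> H) (Hf : is_hom f) a k : f (gpow a k) = gpow (f a) k.
Proof. induction k; simpl. apply hom_one; auto. rewrite Hf, IHk; auto. Qed.

Definition zpow {G : grp} (a : G) (i : Z) : G :=
  if (0 <=? i)%Z then gpow a (Z.to_nat i) else ginv (gpow a (Z.to_nat (- i))).

Lemma zpow_nat {G : grp} (a : G) k : zpow a (Z.of_nat k) = gpow a k.
Proof. unfold zpow. rewrite Nat2Z.id. destruct (0 <=? Z.of_nat k)%Z eqn:E; auto. apply Z.leb_gt in E. lia. Qed.

Lemma zpow0 {G : grp} (a : G) : zpow a 0 = gone.
Proof. reflexivity. Qed.
Lemma zpow1 {G : grp} (a : G) : zpow a 1 = a.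
Proof. unfold zpow. simpl. apply gmul1_r. Qed.

Lemma zpow_succ {G : grp} (a : G) i : zpow a (i + 1) = zpow a i ** a.
Proof.
  unfold zpow. destruct (0 <=? i)%Z eqn:E.
  - apply Z.leb_le in E. replace (0 <=? i + 1)%Z with true by (symmetry; apply Z.leb_le; lia).
    rewrite Z2Nat.inj_add by lia. rewrite Nat.add_comm. apply gpow_S_r.
  - apply Z.leb_gt in E. destruct (Z.eq_dec i (-1)) as [->|Hne].
    + simpl. rewrite gmul1_r, mV. reflexivity.
    + replace (0 <=? i + 1)%Z with false by (symmetry; apply Z.leb_gt; lia).
      replace (Z.to_nat (- i)) with (S (Z.to_nat (- (i + 1)))) by lia.
      simpl. rewrite ginv_mul, <- mA, mV, gmul1_r. reflexivity.
Qed.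

Lemma zpow_pred {G : grp} (a : G) i : zpow a (i - 1) = zpow a i ** ginv a.
Proof. replace (zpow a i) with (zpow a (i - 1 + 1)) by (f_equal; lia).
  rewrite zpow_succ, <- mA, gmulV_r, gmul1_r. reflexivity. Qed.

Lemma zpow_add {G : grp} (a : G) i j : zpow a (i + j) = zpow a i ** zpow a j.
Proof.
  induction j using Z.peano_ind.
  - rewrite Z.add_0_r, zpow0, gmul1_r. reflexivity.
  - replace (i + Z.succ j)%Z with (i + j + 1)%Z by lia. rewrite zpow_succ, IHj.
    replace (Z.succ j) with (j + 1)%Z by lia. rewrite zpow_succ, mA. reflexivity.
  - replace (i + Z.pred j)%Z with (i + j - 1)%Z by lia. rewrite zpow_pred, IHj.
    replace (Z.pred j) with (j - 1)%Z by lia. rewrite zpow_pred, mA. reflexivity.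
Qed.

Lemma zpow_opp {G : grp} (a : G) i : zpow a (- i) = ginv (zpow a i).
Proof. apply ginv_uniq. rewrite <- zpow_add. replace (i + - i)%Z with 0%Z by lia. reflexivity. Qed.

Lemma zpow_commute {G : grp} (a c : G) i : commute a c -> commute (zpow a i) c.
Proof. intro H. unfold zpow. destruct (0 <=? i)%Z. apply gpow_commute; auto.
  apply commute_inv, gpow_commute; auto. Qed.

Lemma hom_zpow {G H : grp} (f : G -> H) (Hf : is_hom f) a i : f (zpow a i) = zpow (f a) i.
Proof. unfold zpow. destruct (0 <=? i)%Z. apply hom_gpow; auto. rewrite hom_inv, hom_gpow; auto. Qed.
Definition LOax {E : grp} (le : E -> E -> Prop) : Prop :=
    (forall a, le a a) /\
    (forall a b, le a b -> le b a -> a = b) /\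
    (forall a b c, le a b -> le b c -> le a c) /\
    (forall a b, le a b \/ le b a) /\
    (forall g a b, le a b -> le (gmul g a) (gmul g b)).

Definition pos {E : grp} (le : E -> E -> Prop) (u : E) := le gone u /\ u <> gone.

Lemma le_inv {E : grp} le (H : @LOax E le) (a : E) : le a gone -> le gone (ginv a).
Proof. destruct H as (_&_&_&_&Hi). intro h. apply (Hi (ginv a)) in h. rewrite mV, gmul1_r in h. auto. Qed.

Lemma pos_mul_nn {E : grp} le (H : @LOax E le) (a b : E) : pos le a -> le gone b -> pos le (a ** b).
Proof.
  pose proof H as (Hr&Ha&Ht&Hto&Hi). intros [h1 h2] h3. pose proof (Hi a _ _ h3) as h4. rewrite gmul1_r in h4.
  split. exact (Ht _ _ _ h1 h4).
  intro E0. apply h2. apply ginv_uniq in E0. subst b.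
  apply (Hi a) in h3. rewrite gmul1_r, gmulV_r in h3. apply Ha; auto.
Qed.

Lemma pos_nn_mul {E : grp} le (H : @LOax E le) (a b : E) : le gone a -> pos le b -> pos le (a ** b).
Proof.
  pose proof H as (Hr&Ha&Ht&Hto&Hi). intros h1 [h2 h3]. split.
  - apply (Hi a) in h2. rewrite gmul1_r in h2. exact (Ht _ _ _ h1 h2).
  - intro E0. apply h3. apply ginv_uniq in E0.
    subst b. apply Ha; auto. apply (Hi (ginv a)) in h1. rewrite gmul1_r, mV in h1. auto.
Qed.

Lemma nn_gpow {E : grp} le (H : @LOax E le) (a : E) k : le gone a -> le gone (gpow a k).
Proof.
  pose proof H as (Hr&Ha&Ht&Hto&Hi). intro h. induction k; simpl. apply Hr.
  apply (Hi a) in IHk. rewrite gmul1_r in IHk. eapply Ht; eauto.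
Qed.

Lemma pos_gpow {E : grp} le (H : @LOax E le) (a : E) k : pos le a -> pos le (gpow a (S k)).
Proof. intro h. simpl. apply pos_mul_nn; auto. apply nn_gpow; auto. apply h. Qed.

Lemma pos_dich {E : grp} le (H : @LOax E le) (u : E) : u <> gone -> pos le u \/ pos le (ginv u).
Proof.
  pose proof H as (Hr&Ha&Ht&Hto&Hi). intro h. destruct (Hto gone u).
  left; split; auto. right; split. apply le_inv; auto.
  intro E0. apply h. rewrite <- (ginv_inv u), E0, ginv1. auto.
Qed.

Lemma pos_not_both {E : grp} le (H : @LOax E le) (u : E) : pos le u -> pos le (ginv u) -> False.
Proof.
  pose proof H as (Hr&Ha&Ht&Hto&Hi). intros [h1 h2] [h3 h4].
  apply (Hi u) in h3. rewrite gmul1_r, gmulV_r in h3. apply h2. apply Ha; auto.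
Qed.

Lemma pos_root {E : grp} le (H : @LOax E le) (a Z : E) k : gpow a (S k) = Z -> pos le Z -> pos le a.
Proof.
  intros h hz. assert (na : a <> gone).
  { intro e. subst. rewrite gpow_one in hz. destruct hz; auto. }
  destruct (pos_dich le H a na) as [p|p]; auto.
  exfalso. apply (pos_gpow le H _ k) in p. rewrite gpow_inv, h in p. exact (pos_not_both le H Z hz p).
Qed.

Lemma sign_pos {E : grp} le (H : @LOax E le) (Sx g Z : E) m :
  gpow Sx (S m) = Z -> gpow g (S m) = Z -> pos le Z ->
  pos le (gpow Sx m ** g) /\ pos le (gpow g m ** Sx).
Proof.
  intros h1 h2 hz. pose proof (pos_root le H _ _ _ h1 hz) as pS. pose proof (pos_root le H _ _ _ h2 hz) as pg.
  split; apply pos_nn_mul; auto; apply nn_gpow; auto; [apply pS | apply pg].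
Qed.

Lemma sign_neg {E : grp} le (H : @LOax E le) (Sx g Z : E) m :
  gpow Sx (S m) = Z -> gpow g (S m) = Z -> pos le (ginv Z) ->
  pos le (ginv (gpow Sx m ** g)) /\ pos le (ginv (gpow g m ** Sx)).
Proof.
  intros h1 h2 hz. rewrite !ginv_mul, <- !gpow_inv.
  assert (h1' : gpow (ginv Sx) (S m) = ginv Z) by (rewrite gpow_inv, h1; auto).
  assert (h2' : gpow (ginv g) (S m) = ginv Z) by (rewrite gpow_inv, h2; auto).
  pose proof (pos_root le H _ _ _ h1' hz) as pS. pose proof (pos_root le H _ _ _ h2' hz) as pg.
  split; apply pos_mul_nn; auto; apply nn_gpow; auto; [apply pS | apply pg].
Qed.

Lemma core {E : grp} le (H : @LOax E le) (Z W Sx g Sy g' : E) m :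
  Z <> gone -> W <> gone -> commute Z W ->
  gpow Sx (S m) = Z -> gpow g (S m) = Z -> gpow Sy (S m) = W -> gpow g' (S m) = W ->
  Z ** W = gpow Sx m ** g -> ginv W ** Z = gpow g m ** Sx ->
  W ** Z = gpow Sy m ** g' -> ginv Z ** W = gpow g' m ** Sy -> False.
Proof.
  intros nz nw cZW e1 e2 e3 e4 e5 e6 e7 e8.
  assert (inv1 : ginv (ginv W ** Z) = ginv Z ** W) by (rewrite ginv_mul, ginv_inv; auto).
  destruct (pos_dich le H Z nz) as [pz|pz]; destruct (pos_dich le H W nw) as [pw|pw].
  - destruct (sign_pos le H _ _ _ m e1 e2 pz) as [_ a2].
    destruct (sign_pos le H _ _ _ m e3 e4 pw) as [_ b2].
    rewrite <- e6 in a2. rewrite <- e8, <- inv1 in b2. first [exact (pos_not_both le H _ a2 b2) | exact (pos_not_both le H _ a1 b1) | exact (pos_not_both le H _ b1 a1) | exact (pos_not_both le H _ b2 a2)].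
  - destruct (sign_pos le H _ _ _ m e1 e2 pz) as [a1 _].
    destruct (sign_neg le H _ _ _ m e3 e4 pw) as [b1 _].
    rewrite <- e5 in a1. rewrite <- e7, <- cZW in b1. first [exact (pos_not_both le H _ a2 b2) | exact (pos_not_both le H _ a1 b1) | exact (pos_not_both le H _ b1 a1) | exact (pos_not_both le H _ b2 a2)].
  - destruct (sign_neg le H _ _ _ m e1 e2 pz) as [a1 _].
    destruct (sign_pos le H _ _ _ m e3 e4 pw) as [b1 _].
    rewrite <- e5 in a1. rewrite <- e7, <- cZW in b1. first [exact (pos_not_both le H _ a2 b2) | exact (pos_not_both le H _ a1 b1) | exact (pos_not_both le H _ b1 a1) | exact (pos_not_both le H _ b2 a2)].
  - destruct (sign_neg le H _ _ _ m e1 e2 pz) as [_ a2].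
    destruct (sign_neg le H _ _ _ m e3 e4 pw) as [_ b2].
    rewrite <- e6 in a2. rewrite <- e8 in b2. rewrite inv1 in a2. first [exact (pos_not_both le H _ a2 b2) | exact (pos_not_both le H _ a1 b1) | exact (pos_not_both le H _ b1 a1) | exact (pos_not_both le H _ b2 a2)].
Qed.
Open Scope Z_scope.

Lemma pair_ext (f g : Z -> Z) (k l : Z) : (forall m, f m = g m) -> k = l -> (f, k) = (g, l).
Proof. intros h1 h2. apply functional_extensionality in h1. subst. reflexivity. Qed.

Definition mul2 (p q : (Z -> Z) * Z) : (Z -> Z) * Z :=
  (fun m => fst p m + fst q (m - snd p), snd p + snd q).
Definition inv2 (p : (Z -> Z) * Z) : (Z -> Z) * Z :=
  (fun m => - fst p (m + snd p), - snd p).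
Definition one2 : (Z -> Z) * Z := (fun _ => 0, 0).

Lemma mul2A a b c : mul2 a (mul2 b c) = mul2 (mul2 a b) c.
Proof. destruct a as [f k], b as [g l], c as [h p]. unfold mul2; simpl.
  apply pair_ext; intros. replace (m - k - l) with (m - (k + l)) by ring. ring. ring. Qed.
Lemma mul21 a : mul2 one2 a = a.
Proof. destruct a as [f k]. unfold mul2; simpl. apply pair_ext; intros. rewrite Z.sub_0_r. ring. ring. Qed.
Lemma mul2V a : mul2 (inv2 a) a = one2.
Proof. destruct a as [f k]. unfold mul2, inv2; cbn [fst snd]. apply pair_ext; intros.
  replace (m - - k) with (m + k) by ring. ring. ring. Qed.

Definition H2 : grp := Grp ((Z -> Z) * Z) mul2 one2 inv2 mul2A mul21 mul2V.

Definition S2 : H2 := (fun _ => 0, 1).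
Definition delta (nZ : Z) (m : Z) : Z := if (m mod nZ =? 0) then 1 else 0.
Definition X2 (nZ : Z) : H2 := (delta nZ, 0).

Lemma H2mul (p q : H2) : p ** q = mul2 p q. Proof. reflexivity. Qed.
Lemma H2inv (p : H2) : ginv p = inv2 p. Proof. reflexivity. Qed.
Lemma H2one : (gone : H2) = one2. Proof. reflexivity. Qed.

Ltac h2 := try change (@gmul H2) with mul2; try change (@ginv H2) with inv2; unfold mul2, inv2; cbn [fst snd].

Lemma gpow_S2 k : gpow S2 k = (fun _ => 0, Z.of_nat k).
Proof. induction k. reflexivity. simpl gpow. rewrite IHk. unfold S2. h2.
  apply pair_ext; intros; lia. Qed.

Lemma conjpow_S2 nZ k : conjpow S2 (X2 nZ) k = (fun m => delta nZ (m - Z.of_nat k), 0).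
Proof. unfold conjpow. rewrite gpow_S2. unfold X2. h2.
  apply pair_ext; intros. ring. ring. Qed.

Lemma commute_H2_0 (f g : Z -> Z) : commute ((f, 0) : H2) (g, 0).
Proof. unfold commute. h2. apply pair_ext; intros.
  rewrite Z.sub_0_r. ring. ring. Qed.

Lemma gamma_H2 (n : nat) : (2 <= n)%nat -> gamma_rels n S2 (X2 (Z.of_nat n)).
Proof.
  intro hn. split.
  - apply commute_comm_one. unfold commute. rewrite gpow_S2. unfold X2. h2.
    apply pair_ext; intros. 2: ring.
    unfold delta. replace (m - Z.of_nat n) with (m + (-1) * Z.of_nat n) by ring.
    rewrite Z_mod_plus_full. ring.
  - intros i _. apply commute_comm_one. rewrite conjpow_S2. apply commute_H2_0.
Qed.

Definition dfun (nZ : Z) (m : Z) : Z := delta nZ m - delta nZ (m - 1).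

Lemma comm_X2_S2 nZ : comm (X2 nZ) S2 = (dfun nZ, 0).
Proof. unfold comm. unfold X2, S2, dfun. h2.
  apply pair_ext; intros. replace (m - (0 + 1) + 0) with (m - 1) by ring. ring. ring. Qed.

Lemma dfun0 nZ : 2 <= nZ -> dfun nZ 0 = 1.
Proof. intro h. unfold dfun, delta. rewrite Z.mod_0_l by lia.
  replace ((0 - 1) mod nZ) with (nZ - 1). 2: { apply Z.mod_unique with (-1); lia. }
  destruct (nZ - 1 =? 0) eqn:E. apply Z.eqb_eq in E; lia. reflexivity. Qed.

Lemma gpow_H2_0 (g : Z -> Z) k : @gpow H2 (g, 0) k = (fun m => Z.of_nat k * g m, 0).
Proof. induction k. simpl. apply pair_ext; intros; ring. simpl gpow. rewrite IHk. h2.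
  apply pair_ext; intros. rewrite Z.sub_0_r. lia. ring. Qed.

Lemma zpow_H2_0 (g : Z -> Z) i : @zpow H2 (g, 0) i = (fun m => i * g m, 0).
Proof. unfold zpow. destruct (0 <=? i) eqn:E.
  - apply Z.leb_le in E. rewrite gpow_H2_0. rewrite Z2Nat.id by lia. reflexivity.
  - apply Z.leb_gt in E. rewrite gpow_H2_0. h2. rewrite Z2Nat.id by lia.
    apply pair_ext; intros. rewrite Z.add_0_r. ring. ring. Qed.

Lemma gpow_H2_c (k : Z) p : @gpow H2 (fun _ => 0, k) p = (fun _ => 0, k * Z.of_nat p).
Proof. induction p. simpl. apply pair_ext; intros; ring. simpl gpow. rewrite IHp. h2.
  apply pair_ext; intros; lia. Qed.

Lemma zpow_H2_c (k : Z) j : @zpow H2 (fun _ => 0, k) j = (fun _ => 0, k * j).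
Proof. unfold zpow. destruct (0 <=? j) eqn:E.
  - apply Z.leb_le in E. rewrite gpow_H2_c. rewrite Z2Nat.id by lia. reflexivity.
  - apply Z.leb_gt in E. rewrite gpow_H2_c. h2. rewrite Z2Nat.id by lia.
    apply pair_ext; intros; ring. Qed.
Close Scope Z_scope.
Open Scope Z_scope.

Lemma mod_mod_any a N : (a mod N) mod N = a mod N.
Proof. destruct (Z.eq_dec N 0) as [->|h]. rewrite !Zmod_0_r. auto. apply Z.mod_mod; auto. Qed.

Definition Hcar (nZ : Z) := {p : Z * Z | fst p mod (nZ * nZ) = fst p}.

Definition nrm (nZ : Z) (u : Z * Z) : Hcar nZ :=
  exist _ (fst u mod (nZ * nZ), snd u) (mod_mod_any (fst u) (nZ * nZ)).

Definition rmul (nZ : Z) (u v : Z * Z) : Z * Z := (fst u + (1 + snd u * nZ) * fst v, snd u + snd v).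
Definition rinv (nZ : Z) (u : Z * Z) : Z * Z := (- ((1 - snd u * nZ) * fst u), - snd u).

Definition mulH nZ (p q : Hcar nZ) : Hcar nZ := nrm nZ (rmul nZ (proj1_sig p) (proj1_sig q)).
Definition invH nZ (p : Hcar nZ) : Hcar nZ := nrm nZ (rinv nZ (proj1_sig p)).
Definition oneH nZ : Hcar nZ := nrm nZ (0, 0).

Lemma nrm_proj nZ (p : Hcar nZ) : nrm nZ (proj1_sig p) = p.
Proof. destruct p as [[a k] h]. unfold nrm. simpl in *.
  apply eq_sig_hprop. intros; apply proof_irrelevance. simpl. rewrite h. reflexivity. Qed.

Lemma nrm_eq nZ u v : fst u mod (nZ * nZ) = fst v mod (nZ * nZ) -> snd u = snd v -> nrm nZ u = nrm nZ v.
Proof. intros h1 h2. unfold nrm. apply eq_sig_hprop. intros; apply proof_irrelevance. simpl. rewrite h1, h2. auto. Qed.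

Lemma mod_shift x y q N : x = y + q * N -> x mod N = y mod N.
Proof. intros ->. apply Z_mod_plus_full. Qed.

Lemma nrm_ind nZ (P : Hcar nZ -> Prop) : (forall u, P (nrm nZ u)) -> forall p, P p.
Proof. intros h p. rewrite <- nrm_proj. apply h. Qed.

Lemma mul_nrm nZ (hn : 2 <= nZ) u v : mulH nZ (nrm nZ u) (nrm nZ v) = nrm nZ (rmul nZ u v).
Proof. unfold mulH. apply nrm_eq; simpl; auto.
  assert (nZ * nZ <> 0) by nia.
  rewrite Z.add_mod_idemp_l by auto.
  rewrite <- Z.add_mod_idemp_r by auto. rewrite Z.mul_mod_idemp_r by auto.
  rewrite Z.add_mod_idemp_r by auto. reflexivity. Qed.

Lemma inv_nrm nZ (hn : 2 <= nZ) u : invH nZ (nrm nZ u) = nrm nZ (rinv nZ u).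
Proof. unfold invH. apply nrm_eq; simpl; auto.
  assert (nZ * nZ <> 0) by nia.
  rewrite <- !Z.mul_opp_l. rewrite Z.mul_mod_idemp_r by auto. reflexivity. Qed.

Lemma mulHA nZ (hn : 2 <= nZ) (a b c : Hcar nZ) : mulH nZ a (mulH nZ b c) = mulH nZ (mulH nZ a b) c.
Proof.
  revert a b c. refine (nrm_ind _ _ _). intros u. refine (nrm_ind _ _ _). intros v. refine (nrm_ind _ _ _). intros w.
  rewrite !mul_nrm by auto. apply nrm_eq. 2: simpl; ring.
  apply mod_shift with (snd u * snd v * fst w). destruct u, v, w; unfold rmul; cbn [fst snd]. ring. Qed.

Lemma mulH1 nZ (hn : 2 <= nZ) (a : Hcar nZ) : mulH nZ (oneH nZ) a = a.
Proof. revert a. refine (nrm_ind _ _ _). intros u. unfold oneH. rewrite mul_nrm by auto.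
  apply nrm_eq. apply mod_shift with 0. destruct u; unfold rmul; cbn [fst snd]. ring. destruct u; reflexivity. Qed.

Lemma mulHV nZ (hn : 2 <= nZ) (a : Hcar nZ) : mulH nZ (invH nZ a) a = oneH nZ.
Proof. revert a. refine (nrm_ind _ _ _). intros u. unfold oneH. rewrite inv_nrm, mul_nrm by auto.
  apply nrm_eq. apply mod_shift with 0. destruct u; unfold rmul, rinv; cbn [fst snd]. ring. destruct u; simpl. ring. Qed.

Definition HH (nZ : Z) (hn : 2 <= nZ) : grp :=
  Grp (Hcar nZ) (mulH nZ) (oneH nZ) (invH nZ) (mulHA nZ hn) (mulH1 nZ hn) (mulHV nZ hn).

Definition SH nZ hn : HH nZ hn := nrm nZ (1, 0).
Definition XH nZ hn : HH nZ hn := nrm nZ (0, 1).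

Lemma HHmul nZ hn u v : @gmul (HH nZ hn) (nrm nZ u) (nrm nZ v) = nrm nZ (rmul nZ u v).
Proof. apply mul_nrm; auto. Qed.
Lemma HHinv nZ hn u : @ginv (HH nZ hn) (nrm nZ u) = nrm nZ (rinv nZ u).
Proof. apply inv_nrm; auto. Qed.

Ltac hh := repeat first [rewrite HHmul | rewrite HHinv | rewrite mul_nrm by auto | rewrite inv_nrm by auto].

Lemma gpow_SH nZ hn k : gpow (SH nZ hn) k = nrm nZ (Z.of_nat k, 0).
Proof. induction k. reflexivity. simpl gpow. rewrite IHk. unfold SH. hh.
  apply nrm_eq. apply mod_shift with 0. unfold rmul; cbn [fst snd]. lia. reflexivity. Qed.

Lemma gamma_HH (n : nat) hn : gamma_rels n (SH (Z.of_nat n) hn) (XH (Z.of_nat n) hn).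
Proof.
  split.
  - apply commute_comm_one. unfold commute. rewrite gpow_SH. unfold XH. hh.
    apply nrm_eq. apply mod_shift with (-1). unfold rmul; cbn [fst snd]. ring. reflexivity.
  - intros i _. apply commute_comm_one. unfold conjpow. rewrite gpow_SH. unfold XH.
    hh. unfold commute. hh.
    apply nrm_eq. apply mod_shift with (- Z.of_nat i). unfold rmul, rinv; cbn [fst snd]. ring. unfold rmul, rinv; cbn [fst snd]. ring.
Qed.

Lemma comm_XH_SH nZ hn : comm (XH nZ hn) (SH nZ hn) = gpow (SH nZ hn) (Z.to_nat nZ).
Proof. rewrite gpow_SH. unfold comm, XH, SH. hh.
  apply nrm_eq. apply mod_shift with 1. unfold rmul, rinv; cbn [fst snd]. rewrite Z2Nat.id by lia. ring.
  reflexivity. Qed.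

Lemma SH_pow_ne1 nZ hn : gpow (SH nZ hn) (Z.to_nat nZ) <> gone.
Proof. rewrite gpow_SH. intro h. apply (f_equal (fun p => fst (proj1_sig p))) in h.
  simpl in h. rewrite Z2Nat.id in h by lia. rewrite Z.mod_small in h by nia.
  rewrite Z.mod_0_l in h by nia. lia. Qed.
Close Scope Z_scope.
Ltac nrmA := repeat rewrite <- mA.

Lemma hom_comm {G H : grp} (f : G -> H) (Hf : is_hom f) a b : f (comm a b) = comm (f a) (f b).
Proof. unfold comm. rewrite !Hf, !(hom_inv f Hf). reflexivity. Qed.

Lemma zpow_commute2 {G : grp} (a b : G) i j : commute a b -> commute (zpow a i) (zpow b j).
Proof. intro h. apply zpow_commute. apply commute_sym. apply zpow_commute. apply commute_sym. auto. Qed.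

Lemma rearr {G : grp} (a b : G) i j i' j' : commute b a ->
  zpow a i ** zpow b j ** (zpow a i' ** zpow b j') = zpow a (i + i') ** zpow b (j + j').
Proof. intro h. rewrite !zpow_add. nrmA. f_equal. rewrite !mA. f_equal.
  apply zpow_commute2; auto. Qed.

Lemma rearr_inv {G : grp} (a b : G) i j : commute b a ->
  ginv (zpow a i ** zpow b j) = zpow a (- i) ** zpow b (- j).
Proof. intro h. rewrite ginv_mul, !zpow_opp. symmetry.
  apply commute_inv, commute_sym, commute_inv, zpow_commute2; auto. Qed.

Lemma conj_hom {E : grp} (t : E) : is_hom (fun u => t ** u ** ginv t).
Proof. intros a b. nrmA. rewrite gmulKl. reflexivity. Qed.

Lemma conj_one {E : grp} (t a : E) : t ** a ** ginv t = gone -> a = gone.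
Proof. intro h. apply (gmul_cancel_l t). rewrite gmul1_r.
  rewrite <- (gmul1_r (t ** a)), <- (mV t), mA, h, m1. reflexivity. Qed.

Theorem proposition1p6 :
  forall (n : nat), 12 <= n ->
  forall (G : grp) (s x : G), is_Gamma n G s x ->
  exists (A B : G -> Prop) (phi : G -> G),
    is_subgroup A /\ is_subgroup B /\ is_iso_between A B phi /\
    forall (E : grp) (iota : G -> E) (t : E),
      is_HNN A B phi E iota t -> ~ left_orderable E.
Proof.
  intros n hn G s x [[hrel1 hrels] UP].
  assert (hn2 : (2 <= Z.of_nat n)%Z) by lia.
  pose (z := gpow s n). pose (w := comm x s).
  assert (czx : commute z x) by (apply comm_one_commute; exact hrel1).
  assert (czs : commute z s) by (apply gpow_commute, commute_refl).
  assert (cwz : commute w z).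
  { unfold w, comm. apply commute_mul; apply commute_mul; try apply commute_inv; apply commute_sym; auto. }
  assert (czw : commute z w) by (apply commute_sym; auto).
  destruct (UP H2 S2 (X2 (Z.of_nat n)) (gamma_H2 n ltac:(lia))) as [f2 [hf2 [f2s [f2x _]]]].
  assert (f2z : f2 z = ((fun _ => 0%Z), Z.of_nat n)).
  { unfold z. rewrite (hom_gpow f2 hf2), f2s, gpow_S2. reflexivity. }
  assert (f2w : f2 w = (dfun (Z.of_nat n), 0%Z)).
  { unfold w. rewrite (hom_comm f2 hf2), f2s, f2x. apply comm_X2_S2. }
  assert (dec : forall i j, fst (f2 (zpow w i ** zpow z j)) 0%Z = i /\ snd (f2 (zpow w i ** zpow z j)) = (Z.of_nat n * j)%Z).
  { intros i j. rewrite hf2, !(hom_zpow f2 hf2), f2z, f2w, zpow_H2_0, zpow_H2_c.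
    change (@gmul H2) with mul2. unfold mul2; cbn [fst snd]. rewrite dfun0 by lia. split; ring. }
  pose (phi := fun y => zpow w (snd (f2 y) / Z.of_nat n)%Z ** zpow z (fst (f2 y) 0%Z)).
  assert (key : forall i j, phi (zpow w i ** zpow z j) = zpow w j ** zpow z i).
  { intros i j. unfold phi. destruct (dec i j) as [d1 d2]. rewrite d1, d2.
    rewrite Z.mul_comm, Z.div_mul by lia. reflexivity. }
  pose (A := fun y => exists i j, y = zpow w i ** zpow z j).
  assert (subA : is_subgroup A).
  { split; [|split].
    - exists 0%Z, 0%Z. rewrite !zpow0, m1. reflexivity.
    - intros a b [i [j ->]] [i' [j' ->]]. exists (i + i')%Z, (j + j')%Z. apply rearr; auto.
    - intros a [i [j ->]]. exists (- i)%Z, (- j)%Z. apply rearr_inv; auto. }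
  exists A, A, phi. split; [exact subA|]. split; [exact subA|]. split.
  { split; [|split; [|split]].
    - intros a [i [j ->]]. rewrite key. exists j, i. reflexivity.
    - intros a b [i [j ->]] [i' [j' ->]]. rewrite rearr by auto. rewrite !key. rewrite rearr by auto.
      f_equal; f_equal; ring.
    - intros a b [i [j ->]] [i' [j' ->]]. rewrite !key. intro e.
      destruct (dec j i) as [d1 d2]. destruct (dec j' i') as [d1' d2']. rewrite e in d1, d2.
      assert (ej : j = j') by congruence. assert (ei' : (Z.of_nat n * i = Z.of_nat n * i')%Z) by congruence.
      assert (ei : i = i') by nia. rewrite ej, ei. reflexivity.
    - intros b [i [j ->]]. exists (zpow w j ** zpow z i). split. exists j, i; reflexivity. apply key. }
  intros E iota t [hiota [hconj UPE]] [le hLO].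
  destruct (UP (HH (Z.of_nat n) hn2) (SH _ hn2) (XH _ hn2) (gamma_HH n hn2)) as [f [hf [fs [fx _]]]].
  assert (fz : f z = gpow (SH _ hn2) n). { unfold z. rewrite (hom_gpow f hf), fs. reflexivity. }
  assert (fw : f w = gpow (SH _ hn2) n).
  { unfold w. rewrite (hom_comm f hf), fs, fx, comm_XH_SH, Nat2Z.id. reflexivity. }
  destruct (UPE _ f gone hf) as [g [hg [gi _]]].
  { intros a [i [j ->]]. rewrite key, m1, ginv1, gmul1_r, !hf, !(hom_zpow f hf), fz, fw, <- !zpow_add.
    f_equal; ring. }
  assert (Az : z = zpow w 0 ** zpow z 1). { rewrite zpow0, zpow1, m1. reflexivity. }
  assert (Aw : w = zpow w 1 ** zpow z 0). { rewrite zpow0, zpow1, gmul1_r. reflexivity. }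
  assert (phiz : phi z = w). { rewrite Az at 1. rewrite key, zpow0, zpow1, gmul1_r. reflexivity. }
  assert (phiw : phi w = z). { rewrite Aw at 1. rewrite key, zpow0, zpow1, m1. reflexivity. }
  assert (tz : t ** iota z ** ginv t = iota w).
  { rewrite hconj. rewrite phiz; reflexivity. exists 0%Z, 1%Z. exact Az. }
  assert (tw : t ** iota w ** ginv t = iota z).
  { rewrite hconj. rewrite phiw; reflexivity. exists 1%Z, 0%Z. exact Aw. }
  assert (nz : iota z <> gone).
  { intro e. apply (SH_pow_ne1 _ hn2). rewrite Nat2Z.id, <- fz, <- gi, e. apply hom_one; auto. }
  assert (nw : iota w <> gone).
  { intro e. apply nz. apply (conj_one t). rewrite tz. exact e. }
  destruct n as [|m]. lia.
  pose (y := s ** x). pose (gg := y ** s ** ginv y).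
  assert (G1 : gpow gg (S m) = z).
  { unfold gg. rewrite gpow_conj. fold z. assert (commute y z) by (unfold y; apply commute_mul; apply commute_sym; auto).
    unfold commute in H. rewrite H, <- mA, gmulV_r, gmul1_r. reflexivity. }
  assert (G2 : z ** w = gpow s m ** gg).
  { unfold z. rewrite gpow_S_r. unfold w, gg, y, comm. rewrite ginv_mul. nrmA. reflexivity. }
  assert (G3 : ginv w ** z = gpow gg m ** s).
  { unfold gg. rewrite gpow_conj. unfold w, y, comm. rewrite !ginv_mul, !ginv_inv.
    assert (cz' : commute (ginv x) z) by (apply commute_inv, commute_sym; auto).
    transitivity (s ** x ** ginv s ** (ginv x ** z)). nrmA. reflexivity.
    rewrite cz'. unfold z. simpl gpow. nrmA. rewrite gmulKl. rewrite mV, gmul1_r. reflexivity. }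
  pose (c := fun u => t ** u ** ginv t). assert (hc : is_hom c) by apply conj_hom.
  apply (core le hLO (iota z) (iota w) (iota s) (iota gg) (c (iota s)) (c (iota gg)) m nz nw).
  - unfold commute. rewrite <- !hiota. f_equal. symmetry. exact cwz.
  - rewrite <- (hom_gpow iota hiota). reflexivity.
  - rewrite <- (hom_gpow iota hiota), G1. reflexivity.
  - rewrite <- (hom_gpow c hc), <- (hom_gpow iota hiota). exact tz.
  - rewrite <- (hom_gpow c hc), <- (hom_gpow iota hiota), G1. exact tz.
  - rewrite <- hiota, G2, hiota, (hom_gpow iota hiota). reflexivity.
  - rewrite <- (hom_inv iota hiota), <- hiota, G3, hiota, (hom_gpow iota hiota). reflexivity.
  - transitivity (c (iota z) ** c (iota w)). { unfold c. rewrite tz, tw. reflexivity. }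
    rewrite <- hc, <- !hiota, G2, hiota, hc, (hom_gpow iota hiota), (hom_gpow c hc). reflexivity.
  - transitivity (ginv (c (iota w)) ** c (iota z)). { unfold c. rewrite tz, tw. reflexivity. }
    rewrite <- (hom_inv c hc), <- hc, <- (hom_inv iota hiota), <- hiota, G3, hiota, hc, (hom_gpow iota hiota), (hom_gpow c hc). reflexivity.
Qed.
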